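(* Let $G$ be a weakly-reversible chemical reaction network in $s$ species and $\mathbf{k}$ a field of characteristic zero. If the ideal $(\mathcal{E}_G)\subseteq\mathbf{k}[x_1,\dots,x_s]$ is prime, then $G$ is not catalytic.
   Context: A chemical reaction network (CRN) consists of positive integers $s,n$, a finite directed graph $G$ with vertex set $\{1,\dots,n\}$ and edge set $E(G)$, and an injective labeling of vertex $i$ by a monic monomial $\psi_i=\prod_{j=1}^s x_j^{y_{ij}}$. $G$ is weakly-reversible iff each connected component is strongly connected. The associated event-system $\mathcal{E}_G$ is the set of binomials $\psi_i-\psi_j$, one for each pair $\{i,j\}$ with $(i,j)\in E(G)$ or $(j,i)\in E(G)$, and $(\mathcal{E}_G)$ is the ideal it generates. The event-graph $\overline{G}$ has as vertices all monic monomials in $x_1,\dots,x_s$, with an edge $(N\psi_i,N\psi_j)$ for each $(i,j)\in E(G)$ and each monic monomial $N$. A weakly-reversible CRN is catalytic iff there exist monic monomials $M,N$ path-connected in $\overline{G}$ such that $M/\gcd(M,N)$ and $N/\gcd(M,N)$ are not path-connected in $\overline{G}$. *)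

(* Defs.v *)
From Stdlib Require Import Relations.
From mathcomp Require Import all_boot all_order all_algebra.
From mathcomp Require Import mpoly.
Set Implicit Arguments. Unset Strict Implicit. Unset Printing Implicit Defensive.
Import GRing.Theory.
Local Open Scope ring_scope.

(* A chemical reaction network: vertices 'I_n, directed edge relation
   [edge : rel 'I_n], labels [psi i] = monic monomial x^{y_i} encoded by its
   exponent vector (a multinomial in s variables). *)
Definition CRN (s n : nat) (edge : rel 'I_n) (psi : 'I_n -> 'X_{1..s}) : Prop :=
  (0 < s)%N /\ (0 < n)%N /\ injective psi.

Definition weakly_reversible (n : nat) (edge : rel 'I_n) : Prop :=
  forall i j : 'I_n,
    connect (fun a b => edge a b || edge b a) i j -> connect edge i j.

(* Edge relation of the event-graph: (N * psi_i, N * psi_j) for (i,j) in E(G). *)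
Definition event_edge (s n : nat) (edge : rel 'I_n) (psi : 'I_n -> 'X_{1..s})
  (M M' : 'X_{1..s}) : Prop :=
  exists (i j : 'I_n) (N : 'X_{1..s}),
    edge i j /\ M = (N + psi i)%MM /\ M' = (N + psi j)%MM.

(* Path-connectedness in the event-graph (paths in the underlying undirected
   graph; for weakly-reversible networks this agrees with directed paths). *)
Definition event_connected (s n : nat) (edge : rel 'I_n)
  (psi : 'I_n -> 'X_{1..s}) : relation 'X_{1..s} :=
  clos_refl_sym_trans _ (event_edge edge psi).

(* M / gcd(M, N) for monic monomials, on exponent vectors. *)
Definition mdivgcd (s : nat) (M N : 'X_{1..s}) : 'X_{1..s} :=
  [multinom (M i - minn (M i) (N i))%N | i < s].

Definition catalytic (s n : nat) (edge : rel 'I_n) (psi : 'I_n -> 'X_{1..s})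
  : Prop :=
  exists M N : 'X_{1..s},
    event_connected edge psi M N /\
    ~ event_connected edge psi (mdivgcd M N) (mdivgcd N M).

Definition in_event_ideal (k : fieldType) (s n : nat) (edge : rel 'I_n)
  (psi : 'I_n -> 'X_{1..s}) (p : {mpoly k[s]}) : Prop :=
  exists (m : nat) (c : 'I_m -> {mpoly k[s]}) (a b : 'I_m -> 'I_n),
    (forall t, edge (a t) (b t) || edge (b t) (a t)) /\
    p = \sum_(t < m) c t * ('X_[psi (a t)] - 'X_[psi (b t)]).
Arguments in_event_ideal k [s n] edge psi p.

Definition event_ideal_prime (k : fieldType) (s n : nat) (edge : rel 'I_n)
  (psi : 'I_n -> 'X_{1..s}) : Prop :=
  ~ in_event_ideal k edge psi 1 /\
  forall p q : {mpoly k[s]}, in_event_ideal k edge psi (p * q) ->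
    in_event_ideal k edge psi p \/ in_event_ideal k edge psi q.
Arguments event_ideal_prime k [s n] edge psi.

(* Main.v *)
Require Import Defs.
From mathcomp Require Import all_boot all_order all_algebra.
From mathcomp Require Import mpoly.
From Stdlib Require Import Relations ClassicalDescription.
Set Implicit Arguments. Unset Strict Implicit. Unset Printing Implicit Defensive.
Import GRing.Theory.
Local Open Scope ring_scope.

Section Phi.
Variables (k : fieldType) (s : nat) (f : 'X_{1..s} -> k).

Definition Phi (p : {mpoly k[s]}) := \sum_(m <- msupp p) p@_m * f m.

Lemma Phi_sub p r : uniq r -> {subset msupp p <= r} ->
  Phi p = \sum_(m <- r) p@_m * f m.
Proof.
move=> ur sub; rewrite /Phi; symmetry.
rewrite (bigID (fun m => m \in msupp p)) /=.
rewrite [X in _ + X]big1 ?addr0; last first.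
  by move=> m /memN_msupp_eq0 ->; rewrite mul0r.
rewrite -big_filter; apply: perm_big.
apply: uniq_perm; first exact: filter_uniq.
  exact: msupp_uniq.
move=> m; rewrite mem_filter; apply/idP/idP.
  by case/andP.
by move=> h; rewrite h sub.
Qed.

Lemma PhiD p q : Phi (p + q) = Phi p + Phi q.
Proof.
set r := undup (msupp p ++ msupp q ++ msupp (p + q)).
have ur : uniq r by apply: undup_uniq.
have s1 : {subset msupp p <= r} by move=> m h; rewrite mem_undup !mem_cat h.
have s2 : {subset msupp q <= r} by move=> m h; rewrite mem_undup !mem_cat h /= ?orbT.
have s3 : {subset msupp (p + q) <= r} by move=> m h; rewrite mem_undup !mem_cat h /= ?orbT.
rewrite (@Phi_sub p r) // (@Phi_sub q r) // (@Phi_sub (p + q) r) //.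
by rewrite -big_split /=; apply: eq_bigr => m _; rewrite mcoeffD mulrDl.
Qed.

Lemma Phi0 : Phi 0 = 0.
Proof. by rewrite /Phi msupp0 big_nil. Qed.

Lemma PhiB p q : Phi (p - q) = Phi p - Phi q.
Proof. by have := PhiD (p - q) q; rewrite subrK => ->; rewrite addrK. Qed.

Lemma Phi_sum (I : Type) (r : seq I) (F : I -> {mpoly k[s]}) :
  Phi (\sum_(i <- r) F i) = \sum_(i <- r) Phi (F i).
Proof.
elim: r => [|x r IH]; first by rewrite !big_nil Phi0.
by rewrite !big_cons PhiD IH.
Qed.

Lemma PhiZX c m : Phi (c *: 'X_[m]) = c * f m.
Proof.
rewrite (@Phi_sub _ [:: m]) //; last first.
  by move=> x /msuppZ_le; rewrite msuppX.
by rewrite big_seq1 mcoeffZ mcoeffX eqxx mulr1.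
Qed.

Lemma PhiMX c a : Phi (c * 'X_[a]) = \sum_(m <- msupp c) c@_m * f (m + a)%MM.
Proof.
rewrite {1}[c]mpolyE mulr_suml Phi_sum; apply: eq_bigr => m _.
by rewrite -scalerAl -mpolyXD PhiZX.
Qed.

End Phi.

Section Main.
Variables (k : fieldType) (s n : nat) (edge : rel 'I_n) (psi : 'I_n -> 'X_{1..s}).
Notation R := (event_connected edge psi).
Notation inI := (in_event_ideal k edge psi).

Lemma Phi_I (f : 'X_{1..s} -> k) :
  (forall u v, R u v -> f u = f v) -> forall p, inI p -> Phi f p = 0.
Proof.
move=> fR p [m [c [a [b [hab ->]]]]].
rewrite Phi_sum big1 // => t _.
rewrite mulrBr PhiB !PhiMX; apply/eqP; rewrite subr_eq0; apply/eqP; apply: eq_bigr => x _; congr (_ * _).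
apply: fR; case/orP: (hab t) => e.
  by apply: rst_step; exists (a t), (b t), x.
by apply: rst_sym; apply: rst_step; exists (b t), (a t), x.
Qed.

Lemma inI0 : inI 0.
Proof.
exists 0%N, (fun _ => 0), (fun t : 'I_0 => False_rect _ (notF (ltn_ord t))),
  (fun t : 'I_0 => False_rect _ (notF (ltn_ord t))).
by split; [case=> //|rewrite big_ord0].
Qed.

Lemma inIN p : inI p -> inI (- p).
Proof.
move=> [m [c [a [b [hab ->]]]]].
exists m, (fun t => - c t), a, b; split => //.
by rewrite -sumrN; apply: eq_bigr => t _; rewrite mulNr.
Qed.

Lemma inID p q : inI p -> inI q -> inI (p + q).
Proof.
move=> [m1 [c1 [a1 [b1 [hab1 ->]]]]] [m2 [c2 [a2 [b2 [hab2 ->]]]]].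
pose sel (T : Type) (F1 : 'I_m1 -> T) (F2 : 'I_m2 -> T) (t : 'I_(m1 + m2)) :=
  match split t with inl i => F1 i | inr j => F2 j end.
exists (m1 + m2)%N, (sel _ c1 c2), (sel _ a1 a2), (sel _ b1 b2); split.
  by move=> t; rewrite /sel; case: (split t).
rewrite big_split_ord /=; congr (_ + _); apply: eq_bigr => t _;
  by rewrite /sel ?(unsplitK (inl _ t)) ?(unsplitK (inr _ t)).
Qed.

Lemma inI_conn M N : R M N -> inI ('X_[M] - 'X_[N]).
Proof.
elim=> {M N}.
- move=> x y [i [j [N0 [e [-> ->]]]]].
  exists 1%N, (fun _ => 'X_[N0]), (fun _ => i), (fun _ => j); split.
    by move=> _; rewrite e.
  by rewrite big_ord1 mulrBr -!mpolyXD !(addmC N0).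
- by move=> x; rewrite subrr; apply: inI0.
- by move=> x y _ h; rewrite -opprB; apply: inIN.
- move=> x y z _ h1 _ h2.
  by have := inID h1 h2; rewrite addrA subrK.
Qed.

End Main.

Theorem theorem5p2 (k : fieldType) (s n : nat) (edge : rel 'I_n)
  (psi : 'I_n -> 'X_{1..s}) :
  [pchar k]%R =i pred0 ->
  CRN edge psi ->
  weakly_reversible edge ->
  event_ideal_prime k edge psi ->
  ~ catalytic edge psi.
Proof.
move=> _ _ _ [_ prime] [M [N [hMN hnot]]].
set M' := mdivgcd M N; set N' := mdivgcd N M.
pose G : 'X_{1..s} := [multinom minn (M i) (N i) | i < s].
have eM : M = (G + M')%MM.
  apply/mnmP => i; rewrite mnmDE !mnmE subnKC //; exact: geq_minl.
have eN : N = (G + N')%MM.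
  apply/mnmP => i; rewrite mnmDE !mnmE minnC subnKC //; exact: geq_minl.
have h := inI_conn k hMN.
rewrite eM eN !mpolyXD -mulrBr in h.
case: (prime _ _ h) => hI.
- have := Phi_I (f := fun _ => (1 : k)) (fun _ _ _ => erefl) hI.
  rewrite (@Phi_sub _ _ _ _ [:: G]) // ?msuppX // big_seq1 mcoeffX eqxx mulr1.
  by move/eqP; rewrite oner_eq0.
- pose f (m : 'X_{1..s}) : k :=
    if excluded_middle_informative (event_connected edge psi M' m) then 1 else 0.
  have fR : forall u v, event_connected edge psi u v -> f u = f v.
    move=> u v huv; rewrite /f.
    case: excluded_middle_informative => h1; case: excluded_middle_informative => h2 //.
    + by case: h2; apply: rst_trans huv.
    + by case: h1; apply: rst_trans h2 (rst_sym _ _ _ _ huv).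
  have := Phi_I fR hI.
  rewrite PhiB (@Phi_sub _ _ _ _ [:: M']) // ?msuppX // (@Phi_sub _ _ _ _ [:: N']) // ?msuppX //.
  rewrite !big_seq1 !mcoeffX !eqxx !mul1r /f.
  case: excluded_middle_informative => h1; last by case: h1; apply: rst_refl.
  case: excluded_middle_informative => h2 //.
  by rewrite subr0 => /eqP; rewrite oner_eq0.
Qed.
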